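(* Let $G$ be a profinite group and $\rho\colon G\to\mathbf{GL}_n(\overline{\mathbf{Q}}_{\ell})$ a continuous representation. Suppose there is an open subgroup $H$ of $G$ such that $\rho(H)\subset\mathbf{GL}_n(\mathbf{Z}_{\ell})$ and $\rho(H)$ contains an open subgroup of $\mathbf{GL}_n(\mathbf{Z}_{\ell})$. Suppose also that there is a dense set of elements $\{g_i\}_{i\in I}$ of $G$ such that $\operatorname{tr}\rho(g_i)\in\mathbf{Q}_{\ell}$ for all $i\in I$. Then $\rho(G)\subset\mathbf{GL}_n(\mathbf{Q}_{\ell})$. *)

(* Defs.v *)
From HB Require Import structures.
From mathcomp Require Import all_boot all_order all_algebra.
From mathcomp Require Import all_classical all_reals.
From mathcomp Require Import topology.
Set Implicit Arguments. Unset Strict Implicit. Unset Printing Implicit Defensive.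
Import Order.TTheory GRing.Theory Num.Theory.
Local Open Scope classical_set_scope.
Local Open Scope ring_scope.

Definition is_group (G : Type) (mul : G -> G -> G) (inv : G -> G) (one : G) :=
  [/\ forall x y z, mul x (mul y z) = mul (mul x y) z,
      forall x, mul one x = x /\ mul x one = x &
      forall x, mul (inv x) x = one /\ mul x (inv x) = one].

Definition is_profinite_group (G : topologicalType)
    (mul : G -> G -> G) (inv : G -> G) (one : G) :=
  [/\ is_group mul inv one,
      continuous (fun p : G * G => mul p.1 p.2),
      continuous inv,
      compact [set: G] /\ hausdorff_space G &
      totally_disconnected [set: G]].

Definition is_subgroup (G : Type) (mul : G -> G -> G) (inv : G -> G) (one : G)
    (H : set G) :=
  [/\ H one, forall x y, H x -> H y -> H (mul x y) & forall x, H x -> H (inv x)].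

(* (L, absv) is a model of Qbar_l with its l-adic absolute value:
   L is algebraically closed, absv a nonarchimedean absolute value on L
   with absv l = 1/l (hence its restriction to Q is the normalized l-adic
   absolute value, by Ostrowski), the topological closure K of Q in L
   (which plays the role of Q_l, see in_Ql) is complete, and L is algebraic
   over K.  These properties characterize (Qbar_l, |.|_l) up to isometric
   isomorphism, with K corresponding to Q_l. *)
Definition in_Ql (R : realType) (L : closedFieldType) (absv : L -> R) (x : L) :=
  forall e : R, 0 < e -> exists q : rat, absv (x - ratr q) < e.

Definition in_Zl (R : realType) (L : closedFieldType) (absv : L -> R) (x : L) :=
  in_Ql absv x /\ absv x <= 1.

Definition is_Qlbar (l : nat) (R : realType) (L : closedFieldType) (absv : L -> R) :=
  [/\ prime l /\ absv (l%:R) = (l%:R)^-1,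
      (forall x, 0 <= absv x) /\ (forall x, absv x = 0 <-> x = 0),
      (forall x y, absv (x * y) = absv x * absv y)
        /\ (forall x y, absv (x + y) <= Num.max (absv x) (absv y)),
      (forall u : nat -> L, (forall k, in_Ql absv (u k)) ->
         (forall e : R, 0 < e -> exists N, forall m k, (N <= m)%N -> (N <= k)%N ->
              absv (u m - u k) < e) ->
         exists x : L, forall e : R, 0 < e -> exists N, forall k, (N <= k)%N ->
              absv (u k - x) < e) &
      (forall x : L, exists p : {poly L},
         [/\ p != 0, forall i, in_Ql absv p`_i & root p x])].

Definition mx_in (L : closedFieldType) (P : L -> Prop) (n : nat) (M : 'M[L]_n) :=
  forall i j, P (M i j).

Definition in_GLn_Zl (R : realType) (L : closedFieldType) (absv : L -> R)
    (n : nat) (M : 'M[L]_n) :=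
  [/\ mx_in (in_Zl absv) M, M \in unitmx & mx_in (in_Zl absv) (invmx M)].

Definition open_subgroup_GLn_Zl (R : realType) (L : closedFieldType)
    (absv : L -> R) (n : nat) (U : set 'M[L]_n) :=
  [/\ (forall M, U M -> in_GLn_Zl absv M),
      U 1%:M,
      (forall M N, U M -> U N -> U (M *m N)),
      (forall M, U M -> U (invmx M)) &
      (forall M, U M -> exists2 e : R, 0 < e & forall N, in_GLn_Zl absv N ->
          (forall i j, absv (N i j - M i j) < e) -> U N)].

Definition is_cont_rep (G : topologicalType) (mul : G -> G -> G) (one : G)
    (R : realType) (L : closedFieldType) (absv : L -> R) (n : nat)
    (rho : G -> 'M[L]_n) :=
  [/\ forall g, rho g \in unitmx,
      forall g h, rho (mul g h) = rho g *m rho h,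
      rho one = 1%:M &
      forall g i j (e : R), 0 < e -> exists2 U, nbhs g U &
          forall h, U h -> absv (rho h i j - rho g i j) < e].

(* Main.v *)
Require Import Defs.
From HB Require Import structures.
From mathcomp Require Import all_boot all_order all_algebra.
From mathcomp Require Import all_classical all_reals.
From mathcomp Require Import topology.
From mathcomp Require Import ring lra.
Import Order.TTheory GRing.Theory Num.Theory.
Local Open Scope classical_set_scope.
Local Open Scope ring_scope.

Lemma av0 {l} {R : realType} {L : closedFieldType} {absv : L -> R}
  (hL : is_Qlbar l absv) : absv 0 = 0.
Proof. by case: hL => _ [_ hz] _ _ _; apply/hz. Qed.

Lemma avM {l} {R : realType} {L : closedFieldType} {absv : L -> R}
  (hL : is_Qlbar l absv) x y : absv (x * y) = absv x * absv y.
Proof. by case: hL => _ _ [hM _] _ _. Qed.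

Lemma avge0 {l} {R : realType} {L : closedFieldType} {absv : L -> R}
  (hL : is_Qlbar l absv) x : 0 <= absv x.
Proof. by case: hL => _ [h _] _ _ _. Qed.

Lemma avU {l} {R : realType} {L : closedFieldType} {absv : L -> R}
  (hL : is_Qlbar l absv) x y : absv (x + y) <= Num.max (absv x) (absv y).
Proof. by case: hL => _ _ [_ hU] _ _. Qed.

Lemma av1 {l} {R : realType} {L : closedFieldType} {absv : L -> R}
  (hL : is_Qlbar l absv) : absv 1 = 1.
Proof.
have h : absv 1 = absv 1 * absv 1 by rewrite -(avM hL) mulr1.
have nz : absv 1 != 0.
  by apply/eqP; case: hL => _ [_ hz] _ _ _ /hz /eqP; rewrite oner_eq0.
by apply: (mulfI nz); rewrite mulr1 -h.
Qed.

Lemma avN {l} {R : realType} {L : closedFieldType} {absv : L -> R}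
  (hL : is_Qlbar l absv) x : absv (- x) = absv x.
Proof.
have h : absv (-1) * absv (-1) = 1 by rewrite -(avM hL) mulrNN mulr1 (av1 hL).
have h0 := avge0 hL (-1).
have e1 : absv (-1) = 1 by nra.
by rewrite -mulN1r (avM hL) e1 mul1r.
Qed.

Lemma av_lt {l} {R : realType} {L : closedFieldType} {absv : L -> R}
  (hL : is_Qlbar l absv) x y e : absv x < e -> absv y < e -> absv (x + y) < e.
Proof.
move=> hx hy; apply: le_lt_trans (avU hL x y) _.
by rewrite gt_max hx hy.
Qed.

Lemma av_sum {l} {R : realType} {L : closedFieldType} {absv : L -> R}
  (hL : is_Qlbar l absv) (I : Type) (r : seq I) (P : pred I) (F : I -> L) e :
  0 < e -> (forall i, P i -> absv (F i) < e) -> absv (\sum_(i <- r | P i) F i) < e.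
Proof.
move=> e0 hF; apply: (big_ind (fun x => absv x < e)) => //.
  by rewrite (av0 hL).
by move=> x y; apply: (av_lt hL).
Qed.


Lemma av_nat {l} {R : realType} {L : closedFieldType} {absv : L -> R}
  (hL : is_Qlbar l absv) (n : nat) : absv (n%:R : L) <= 1.
Proof.
elim: n => [|n IH]; first by rewrite (av0 hL).
rewrite -addn1 natrD; apply: le_trans (avU hL _ _) _.
by rewrite ge_max IH /= (av1 hL).
Qed.

Lemma char0 {l} {R : realType} {L : closedFieldType} {absv : L -> R}
  (hL : is_Qlbar l absv) (n : nat) : (0 < n)%N -> (n%:R : L) != 0.
Proof.
move=> n0; apply/negP => /eqP hn.
have [[pl hl] _ _ _ _] := hL.
have l1 : (1 < l)%N by apply: prime_gt1.
have lR : (1 : R) < l%:R by rewrite ltr1n.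
have l0 : (l%:R : L) != 0.
  apply/eqP => h; move: hl; rewrite h (av0 hL) => /eqP; rewrite eq_sym invr_eq0.
  by rewrite pnatr_eq0 => /eqP l0; move: l1; rewrite l0.
case: (pfactor_coprime pl n0) => m cm nE.
move: hn; rewrite nE natrM natrX => /eqP; rewrite mulf_eq0 expf_eq0 (negbTE l0) andbF orbF.
move=> /eqP hm.
have m0 : (0 < m)%N by move: n0; rewrite nE muln_gt0 => /andP[].
case: (Bezoutl l m0) => a _.
rewrite gcdnC; move: cm; rewrite /coprime => /eqP ->.
case/dvdnP => k hk.
have : ((1 + a * l)%:R : L) = 0 by rewrite hk natrM hm mulr0.
rewrite natrD natrM => /eqP; rewrite addr_eq0 => /eqP h.
have := congr1 absv h; rewrite (avN hL) (av1 hL) (avM hL) hl => h1.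
have := av_nat hL a.
have lnz : (l%:R : R) != 0 by rewrite lt0r_neq0 // (lt_trans ltr01 lR).
have ha : absv (a%:R : L) = l%:R by move/(congr1 (fun z => z * (l%:R : R))): h1; rewrite mulfVK // mul1r.
rewrite ha => /(lt_le_trans lR); by rewrite ltxx.
Qed.

Lemma nz_den {l} {R : realType} {L : closedFieldType} {absv : L -> R}
  (hL : is_Qlbar l absv) (x : rat) : ((denq x)%:~R : L) != 0.
Proof.
have := denq_gt0 x; case: (denq x) => // k; rewrite ltz_nat => k0.
by rewrite -pmulrn; exact: (char0 hL k k0).
Qed.

Lemma ratrB {l} {R : realType} {L : closedFieldType} {absv : L -> R}
  (hL : is_Qlbar l absv) (x y : rat) : ratr (x - y) = ratr x - ratr y :> L.
Proof.
have injZtoQ: @injective rat int intr by apply: intr_inj.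
have nzd := nz_den hL.
apply: (canLR (mulfK (nzd _))); apply: (mulIf (nzd x)).
rewrite /ratr.
rewrite mulrAC mulrBl divfK ?nzd // mulrAC -!rmorphM.
apply: (mulIf (nzd y)); rewrite mulrAC mulrBl divfK ?nzd //.
rewrite -!(rmorphM, rmorphB); congr _%:~R; apply: injZtoQ.
rewrite !(rmorphM, rmorphB) /= [_ - _]lock /= -lock !numqE.
by rewrite (mulrAC y) -!mulrBl -mulrA mulrAC !mulrA.
Qed.

Lemma ratrM {l} {R : realType} {L : closedFieldType} {absv : L -> R}
  (hL : is_Qlbar l absv) (x y : rat) : ratr (x * y) = ratr x * ratr y :> L.
Proof.
have injZtoQ: @injective rat int intr by apply: intr_inj.
have nzd := nz_den hL.
rewrite /ratr mulrC mulrAC; apply: canLR (mulKf (nzd _)) _; rewrite !mulrA.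
do 2!apply: canRL (mulfK (nzd _)) _; rewrite -!rmorphM; congr _%:~R.
apply: injZtoQ; rewrite !rmorphM [x * y]lock /= !numqE -lock.
by rewrite -!mulrA mulrA mulrCA -!mulrA (mulrCA y).
Qed.

Lemma in_Ql_ratr {l} {R : realType} {L : closedFieldType} {absv : L -> R}
  (hL : is_Qlbar l absv) q : in_Ql absv (ratr q).
Proof. by move=> e e0; exists q; rewrite subrr (av0 hL). Qed.

Lemma in_QlB {l} {R : realType} {L : closedFieldType} {absv : L -> R}
  (hL : is_Qlbar l absv) x y : in_Ql absv x -> in_Ql absv y -> in_Ql absv (x - y).
Proof.
move=> hx hy e e0; case: (hx e e0) => q hq; case: (hy e e0) => r hr.
exists (q - r); rewrite (ratrB hL).
have -> : x - y - (ratr q - ratr r) = (x - ratr q) + - (y - ratr r) by ring.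
by apply: (av_lt hL) => //; rewrite (avN hL).
Qed.

Lemma in_QlMr {l} {R : realType} {L : closedFieldType} {absv : L -> R}
  (hL : is_Qlbar l absv) x r : in_Ql absv x -> in_Ql absv (x * ratr r).
Proof.
move=> hx; have [a0|a0] := eqVneq (absv (ratr r : L)) 0.
  have -> : (ratr r : L) = 0 by case: hL a0 => _ [_ hz] _ _ _ /hz.
  have z : (ratr 0 : L) = 0 by rewrite /ratr (_ : numq 0 = 0) // mul0r.
  by rewrite mulr0 -z; apply: (in_Ql_ratr hL).
have {}a0 : 0 < absv (ratr r : L) by rewrite lt_def a0 (avge0 hL).
move=> e e0; case: (hx (e / absv (ratr r : L))); first by rewrite divr_gt0.
move=> q hq; exists (q * r); rewrite (ratrM hL) -mulrBl (avM hL).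
by rewrite -ltr_pdivlMr.
Qed.

Lemma ratr0 {l} {R : realType} {L : closedFieldType} {absv : L -> R}
  (hL : is_Qlbar l absv) : ratr (0 : rat) = 0 :> L.
Proof. by rewrite /ratr (_ : numq 0 = 0) // mul0r. Qed.

Lemma ratr1 {l} {R : realType} {L : closedFieldType} {absv : L -> R}
  (hL : is_Qlbar l absv) : ratr (1 : rat) = 1 :> L.
Proof. by rewrite /ratr (_ : numq 1 = 1) // (_ : denq 1 = 1) // divr1. Qed.

Lemma ratrN {l} {R : realType} {L : closedFieldType} {absv : L -> R}
  (hL : is_Qlbar l absv) (x : rat) : ratr (- x) = - ratr x :> L.
Proof. by rewrite -sub0r (ratrB hL) (ratr0 hL) sub0r. Qed.

Lemma ratrD {l} {R : realType} {L : closedFieldType} {absv : L -> R}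
  (hL : is_Qlbar l absv) (x y : rat) : ratr (x + y) = ratr x + ratr y :> L.
Proof. have := ratrB hL x (- y). by rewrite opprK (ratrN hL) opprK. Qed.

Lemma avX {l} {R : realType} {L : closedFieldType} {absv : L -> R}
  (hL : is_Qlbar l absv) (x : L) k : absv (x ^+ k) = absv x ^+ k.
Proof.
elim: k => [|k IH]; first by rewrite !expr0 (av1 hL).
by rewrite !exprS (avM hL) IH.
Qed.

Lemma entryZ {l} {R : realType} {L : closedFieldType} {absv : L -> R}
  (hL : is_Qlbar l absv) (b1 b2 : bool) (x : rat) :
  absv (ratr x : L) <= 1 -> in_Zl absv ((b1%:R : L) + ratr x * b2%:R).
Proof.
move=> hx; split.
  rewrite -(ratr_nat L b1) -(ratr_nat L b2) -(ratrM hL) -(ratrD hL).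
  exact: (in_Ql_ratr hL).
apply: le_trans (avU hL _ _) _; rewrite ge_max (av_nat hL) /= (avM hL).
by rewrite mulr_ile1 ?(avge0 hL) ?(av_nat hL).
Qed.

Lemma trD (L : closedFieldType) n (A : 'M[L]_n) (i j : 'I_n) :
  \tr (A *m delta_mx j i) = A i j.
Proof.
rewrite /mxtrace (bigD1 i) //= big1 ?addr0.
  rewrite mxE (bigD1 j) //= big1 ?addr0; first by rewrite mxE !eqxx mulr1.
  by move=> m hm; rewrite mxE (negbTE hm) mulr0.
move=> k hk; rewrite mxE big1 // => m _.
by rewrite mxE (negbTE hk) andbF mulr0.
Qed.

Lemma av1c {l} {R : realType} {L : closedFieldType} {absv : L -> R}
  (hL : is_Qlbar l absv) (x : L) : absv x < 1 -> absv (1 + x) = 1.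
Proof.
move=> hx; apply/le_anti/andP; split.
  apply: le_trans (avU hL _ _) _; rewrite ge_max (av1 hL) lexx /=.
  exact: ltW.
rewrite leNgt; apply/negP => h.
have hN : absv (- x) < 1 by rewrite (avN hL).
have := av_lt hL _ _ _ h hN.
by rewrite addrK (av1 hL) ltxx.
Qed.

Theorem lemma3p2 (l : nat) (R : realType) (L : closedFieldType) (absv : L -> R)
  (hL : is_Qlbar l absv)
  (G : topologicalType) (mul : G -> G -> G) (inv : G -> G) (one : G)
  (hG : is_profinite_group mul inv one)
  (n : nat) (rho : G -> 'M[L]_n) (hrho : is_cont_rep mul one absv rho)
  (H : set G) (hHsub : is_subgroup mul inv one H) (hHopen : open H)
  (hHZl : forall h, H h -> in_GLn_Zl absv (rho h))
  (hHopen_img : exists U : set 'M[L]_n,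
      open_subgroup_GLn_Zl absv U /\ (forall M, U M -> exists2 h, H h & rho h = M))
  (I : Type) (gs : I -> G) (hdense : dense (range gs))
  (htr : forall i, in_Ql absv (\tr (rho (gs i)))) :
  forall g, mx_in (in_Ql absv) (rho g).
Proof.
case: hrho => hunit hmul hone hcont.
have trQ : forall g, in_Ql absv (\tr (rho g)).
  move=> g0 e e0.
  have nb : nbhs g0 (fun h => forall i : 'I_n, absv (rho h i i - rho g0 i i) < e).
    apply: filter_forall => i.
    case: (hcont g0 i i e e0) => U nU hU'.
    exact: filterS nU.
  move: nb; rewrite nbhsE => -[B [oB Bg] BS].
  have [x [Bx [i _ xi]]] := hdense B (ex_intro _ g0 Bg) oB.
  case: (htr i e e0) => q hq; exists q.
  have -> : \tr (rho g0) - ratr q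
      = (\tr (rho (gs i)) - ratr q) + - (\tr (rho (gs i)) - \tr (rho g0)) by ring.
  apply: (av_lt hL) => //; rewrite (avN hL) /mxtrace -sumrB.
  apply: (av_sum hL) => // k _; rewrite xi; exact: BS x Bx k.
move=> g i j.
have [[pl hl] _ _ _ _] := hL.
have l1 : (1 < l)%N by apply: prime_gt1.
case: hHopen_img => U [[hUZ hU1 _ _ hUo] hUim].
case: (hUo _ hU1) => e e0 he.
set K := Num.Def.archi_bound (e^-1).
have hK : e^-1 < K%:R by apply: archi_boundP; rewrite invr_ge0 ltW.
set k := K.+1.
set c : rat := (l%:R) ^+ k.
set cL : L := ratr c.
have cLE : cL = (l%:R) ^+ k by rewrite /cL /c -natrX ratr_nat natrX.
have klk : (k < l ^ k)%N by apply: ltn_expl.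
have X1 : (1 : R) < (l ^ k)%:R by rewrite ltr1n; apply: leq_ltn_trans klk.
have XK : e^-1 < (l ^ k)%:R.
  apply: (lt_trans hK); rewrite ltr_nat; apply: ltn_trans klk; exact: ltnSn.
have acE : absv cL = ((l ^ k)%:R)^-1.
  by rewrite cLE (avX hL) hl exprVn natrX.
have X0 : (0 : R) < (l ^ k)%:R by apply: lt_trans X1.
have ac_e : absv cL < e by rewrite acE invf_plt ?posrE.
have ac1 : absv cL < 1 by rewrite acE invf_lt1.
have c0 : 0 < c by rewrite /c exprn_gt0 // ltr0n; apply: ltnW.
set b : bool := (i == j).
set d : rat := - c / (1 + c * b%:R).
have hb0 : 0 < 1 + c * b%:R by rewrite ltr_pwDl // mulr_ge0 // ltW.
have hd : d * (1 + c * b%:R) = - c by rewrite /d mulfVK // gt_eqF.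
have hz : d + (c + c * d * b%:R) = 0.
  have -> : d + (c + c * d * b%:R) = d * (1 + c * b%:R) + c by ring.
  by rewrite hd addNr.
set dL : L := ratr d.
set D : 'M[L]_n := delta_mx j i.
set N : 'M[L]_n := 1%:M + cL *: D.
set N' : 'M[L]_n := 1%:M + dL *: D.
have hNN : N *m N' = 1%:M.
  rewrite /N /N' mulmxDl !mulmxDr !mulmx1 !mul1mx -!scalemxAl -!scalemxAr.
  rewrite /D mul_delta_mx_cond scalerA -scaler_nat scalerA -/D.
  rewrite -addrA -!scalerDl.
  have -> : dL + (cL + cL * dL * b%:R) = 0.
    by rewrite /dL /cL -(ratr_nat L b) -!(ratrM hL) -!(ratrD hL) hz (ratr0 hL).
  by rewrite scale0r addr0.
have [Nu _] := mulmx1_unit hNN.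
have NiE : invmx N = N' by rewrite -[RHS](mulKmx Nu) hNN mulmx1.
have adL : absv dL <= 1.
  have h1 : dL * (1 + cL * b%:R) = - cL.
    by rewrite /dL /cL -(ratr_nat L b) -(ratrM hL) -(ratr1 hL) -(ratrD hL) -(ratrM hL) hd (ratrN hL).
  have h2 : absv (1 + cL * b%:R) = 1.
    case: (b); first by rewrite mulr1 (av1c hL).
    by rewrite mulr0 addr0 (av1 hL).
  have := congr1 absv h1; rewrite (avM hL) h2 mulr1 (avN hL) => ->.
  exact: ltW.
have NE : forall a a', N a a' = (a == a')%:R + cL * ((a == j) && (a' == i))%:R.
  by move=> a a'; rewrite !mxE.
have N'E : forall a a', N' a a' = (a == a')%:R + dL * ((a == j) && (a' == i))%:R.
  by move=> a a'; rewrite !mxE.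
have NGL : in_GLn_Zl absv N.
  split => //.
    by move=> a a'; rewrite NE; apply: (entryZ hL); apply: ltW.
  by move=> a a'; rewrite NiE N'E; apply: (entryZ hL).
have NU : U N.
  apply: he => // a a'.
  rewrite /N [X in X - _]mxE addrAC subrr add0r !mxE.
  case: ((a == j) && (a' == i)); first by rewrite mulr1.
  by rewrite mulr0 (av0 hL).
case: (hUim _ NU) => h Hh rhoh.
have trE : \tr (rho (mul g h)) = \tr (rho g) + cL * rho g i j.
  by rewrite hmul rhoh /N mulmxDr mulmx1 mxtraceD -scalemxAr mxtraceZ /D trD.
have -> : rho g i j = (\tr (rho (mul g h)) - \tr (rho g)) * ratr c^-1.
  rewrite trE addrAC subrr add0r mulrAC /cL -(ratrM hL) mulfV ?gt_eqF //.
  by rewrite (ratr1 hL) mul1r.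
by apply: (in_QlMr hL); apply: (in_QlB hL); apply: trQ.
Qed.
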